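(* Let $Y$ be a sofic shift. For any labeled graph $(G,L_G)$ presenting $Y$ which is right-resolving, regular and follower-separated, the number $\# V_G$ of vertices is at most the number of distinct sets $F(y)$, $y\in Y$. Moreover, the future cover $(\mathbb K(Y),L_{\mathbb K(Y)})$ is, up to isomorphism of labeled graphs, the only presentation of $Y$ which is right-resolving, regular and follower-separated and whose number of vertices equals the number of distinct sets $F(y)$, $y\in Y$.
   Context: A labeled graph $(G,L_G)$: finite directed graph $G$ (vertices $V_G$, edges $E_G$, source/terminal maps $s_G,t_G$), without sinks or sources, with labeling $L_G:E_G\to A$, $A$ a finite alphabet; $X_G$ is its edge shift; $L_G$ acts coordinatewise on paths; it presents $Y=L_G(X_G)$. $X_G[0,\infty)$ denotes right-infinite paths, $X_G(-\infty,-1]$ left-infinite paths; $s_G$ of a right-infinite path is the source of its first edge, $t_G$ of a left-infinite path is the terminal vertex of its last edge; $Y[0,\infty)=\{y_{[0,\infty)}:y\in Y\}$. Right-resolving: distinct edges with the same source have distinct labels. Follower set of a vertex: $f_G(v)=\{L_G(x):x\in X_G[0,\infty), s_G(x)=v\}$. For $y\in Y$: $F(y)=\{w\in Y[0,\infty): y_{(-\infty,-1]}w\in Y\}$ (the follower sets of $Y$). A vertex $v$ is regular if there is $z\in X_G$ with $t_G(z_{(-\infty,-1]})=v$ and $f_G(v)=F(L_G(z))$; the labeled graph is regular if all vertices are regular. Follower-separated: $f_G(v)=f_G(w)$ implies $v=w$. Future cover $(\mathbb K(Y),L_{\mathbb K(Y)})$: vertices are the distinct sets $F(y)$, $y\in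 Y$; there is an edge labeled $a\in A$ from $F(y)$ to $F(z)$ exactly when $F(z)=\{w\in A^{\mathbb N}: aw\in F(y)\}$ (one edge per such pair and label). Isomorphism of labeled graphs: a graph isomorphism preserving labels. *)

(* Defs.v *)
From mathcomp Require Import all_boot all_order all_algebra.
Set Implicit Arguments. Unset Strict Implicit. Unset Printing Implicit Defensive.
Import GRing.Theory.
Local Open Scope ring_scope.

Record lgraph (A : finType) := LGraph {
  lV : finType;
  lE : finType;
  src : lE -> lV;
  tgt : lE -> lV;
  lab : lE -> A
}.

Section Defs.
Variable A : finType.

Definition essential (G : lgraph A) : Prop :=
  forall v : lV G, (exists e : lE G, src e = v) /\ (exists e : lE G, tgt e = v).

Definition edge_shift (G : lgraph A) (x : int -> lE G) : Prop :=
  forall i : int, tgt (x i) = src (x (i + 1)).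

Definition right_path (G : lgraph A) (x : nat -> lE G) : Prop :=
  forall n : nat, tgt (x n) = src (x n.+1).

Definition label_image (G : lgraph A) (y : int -> A) : Prop :=
  exists x : int -> lE G, edge_shift x /\ y = (fun i => lab (x i)).

Definition presents (G : lgraph A) (Y : (int -> A) -> Prop) : Prop :=
  essential G /\ forall y, Y y <-> label_image G y.

Definition sofic (Y : (int -> A) -> Prop) : Prop :=
  exists G : lgraph A, presents G Y.

Definition right_resolving (G : lgraph A) : Prop :=
  forall e1 e2 : lE G, src e1 = src e2 -> lab e1 = lab e2 -> e1 = e2.

Definition vfollower (G : lgraph A) (v : lV G) (w : nat -> A) : Prop :=
  exists x : nat -> lE G, right_path x /\ src (x 0%N) = v /\ w = (fun n => lab (x n)).

Definition right_rays (Y : (int -> A) -> Prop) (w : nat -> A) : Prop :=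
  exists y, Y y /\ w = (fun n : nat => y (n%:Z)).

Definition concat (y : int -> A) (w : nat -> A) : int -> A :=
  fun i => match i with Posz n => w n | Negz _ => y i end.

Definition Ffollower (Y : (int -> A) -> Prop) (y : int -> A) (w : nat -> A) : Prop :=
  right_rays Y w /\ Y (concat y w).

Definition regular_vertex (G : lgraph A) (Y : (int -> A) -> Prop) (v : lV G) : Prop :=
  exists z : int -> lE G, edge_shift z /\ tgt (z (-1)) = v /\
            vfollower v = Ffollower Y (fun i => lab (z i)).

Definition regular (G : lgraph A) (Y : (int -> A) -> Prop) : Prop :=
  forall v : lV G, regular_vertex Y v.

Definition follower_separated (G : lgraph A) : Prop :=
  forall v w : lV G, vfollower v = vfollower w -> v = w.

Definition follower_sets (Y : (int -> A) -> Prop) (X : (nat -> A) -> Prop) : Prop :=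
  exists y, Y y /\ X = Ffollower Y y.

Definition has_card (T : Type) (S : T -> Prop) (N : nat) : Prop :=
  exists f : 'I_N -> T, injective f /\ forall X, S X <-> exists i, f i = X.

Definition prepend (a : A) (w : nat -> A) : nat -> A :=
  fun n => if n is k.+1 then w k else a.

Definition derive (a : A) (X : (nat -> A) -> Prop) : (nat -> A) -> Prop :=
  fun w => X (prepend a w).

(* K, via phi : V_K -> sets, is (a copy of) the future cover K(Y):
   phi is a bijection of V_K onto the distinct F(y), and there is exactly
   one edge labeled a from u to v iff phi v = {w | a w in phi u}, none otherwise. *)
Definition is_future_cover (Y : (int -> A) -> Prop) (K : lgraph A)
    (phi : lV K -> (nat -> A) -> Prop) : Prop :=
  injective phi /\
  (forall X, follower_sets Y X <-> exists v, phi v = X) /\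
  (forall (u v : lV K) (a : A),
     (phi v = derive a (phi u) ->
        exists! e : lE K, src e = u /\ tgt e = v /\ lab e = a) /\
     (phi v <> derive a (phi u) ->
        forall e : lE K, ~ (src e = u /\ tgt e = v /\ lab e = a))).

Definition lgraph_iso (G H : lgraph A) : Prop :=
  exists (fV : lV G -> lV H) (fE : lE G -> lE H),
    bijective fV /\ bijective fE /\
    forall e : lE G, src (fE e) = fV (src e) /\ tgt (fE e) = fV (tgt e) /\
              lab (fE e) = lab e.

End Defs.

Arguments is_future_cover {A} Y K phi.
Arguments regular {A} G Y.

(* Main.v *)
Require Import Defs.
From mathcomp Require Import all_boot all_order all_algebra.
From mathcomp Require Import boolp.
From mathcomp Require Import zify ring.
Set Implicit Arguments. Unset Strict Implicit. Unset Printing Implicit Defensive.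
Import GRing.Theory.
Local Open Scope ring_scope.

Section S.
Variable A : finType.
Implicit Types (Y : (int -> A) -> Prop) (z u : int -> A) (w : nat -> A).

Lemma F_iff Y z w : Ffollower Y z w <-> Y (concat z w).
Proof.
split; first by case.
move=> H; split => //; exists (concat z w); split => //.
Qed.

Definition sh (k : int) (u : int -> A) : int -> A := fun j => u (j + k).

Lemma negz_succ (n : nat) : Negz n.+1 + 1 = Negz n.
Proof. by rewrite !NegzE; apply/eqP; rewrite -subr_eq0; apply/eqP; ring. Qed.
Lemma negz0_succ : Negz 0 + 1 = 0.
Proof. by rewrite NegzE addNr. Qed.
Lemma posz_succ (n : nat) : Posz n + 1 = Posz n.+1.
Proof. by rewrite -PoszD addn1. Qed.
Lemma m1E : (-1 : int) = Negz 0.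
Proof. by rewrite NegzE. Qed.

Lemma concat_sh1 z w :
  concat (sh 1 z) w = sh 1 (concat z (prepend (z 0) w)).
Proof.
apply: funext => -[n|[|n]] //=.
by rewrite /sh /concat posz_succ.
Qed.

Lemma concat_concat z w w' : concat (concat z w) w' = concat z w'.
Proof. by apply: funext => -[n|n]. Qed.

Lemma concat_self z : concat z (fun n => z (Posz n)) = z.
Proof. by apply: funext => -[n|n]. Qed.

Lemma sh_sh a b u : sh a (sh b u) = sh (a + b) u.
Proof. by apply: funext => j; rewrite /sh addrA. Qed.
Lemma sh0 u : sh 0 u = u.
Proof. by apply: funext => j; rewrite /sh addr0. Qed.

End S.

Lemma fin_bound (T : finType) (R : T -> nat -> Prop) :
  (forall t, exists n, R t n) -> (forall t n m, (n <= m)%N -> R t n -> R t m) ->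
  exists M, forall t, R t M.
Proof.
move=> H Hm; have [f Hf] := choice H.
exists (\max_t f t)%N => t; apply: (Hm t (f t)) => //.
exact: (leq_bigmax_cond (P := predT)).
Qed.


Section Closed.
Variable A : finType.
Variable G : lgraph A.
Variable y : int -> A.
Hypothesis H : forall n : nat, exists y', label_image G y' /\
   forall j : int, (`|j| <= n)%N -> y' j = y j.

Definition Q (i : int) (e : lE G) (n : nat) := exists x, edge_shift x /\ x i = e /\
   forall j : int, (`|j| <= n)%N -> lab (x j) = y j.
Definition P i e := forall n, Q i e n.

Lemma Q_mono i e n m : (n <= m)%N -> Q i e m -> Q i e n.
Proof.
move=> nm [x [Hx [Hi Hl]]]; exists x; split => //; split => // j Hj.
apply: Hl; exact: leq_trans nm.
Qed.

Lemma P_lab i e : P i e -> lab e = y i.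
Proof. by move=> /(_ `|i|%N) [x [_ [<- Hl]]]; apply: Hl. Qed.

Lemma P0 : exists e, P 0 e.
Proof.
apply: contrapT => Hn.
have Hb : forall e, exists n, ~ Q 0 e n.
  move=> e; apply: contrapT => He; apply: Hn; exists e => n.
  by apply: contrapT => Hq; apply: He; exists n.
have [M HM] := fin_bound Hb (fun t n m nm Hq Hq' => Hq (Q_mono nm Hq')).
have [y' [[x [Hx ->]] Ha]] := H M.
by apply: (HM (x 0)); exists x; split.
Qed.

Lemma P_fwd i e : P i e -> exists e', tgt e = src e' /\ P (i + 1) e'.
Proof.
move=> Pe; apply: contrapT => Hn.
have Hb : forall e', exists n, tgt e = src e' -> ~ Q (i + 1) e' n.
  move=> e'; apply: contrapT => He; apply: Hn; exists e'.
  have Ht : tgt e = src e'.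
    by apply: contrapT => Ht; apply: He; exists 0%N => /Ht.
  split => // n; apply: contrapT => Hq; apply: He; exists n => _; exact: Hq.
have [M HM] := fin_bound Hb (fun t n m nm Hq Ht Hq' => Hq Ht (Q_mono nm Hq')).
have [x [Hx [Hi Ha]]] := Pe M.
apply: (HM (x (i + 1))); first by rewrite -Hi; apply: Hx.
by exists x.
Qed.

Lemma P_bwd i e : P i e -> exists e', tgt e' = src e /\ P (i - 1) e'.
Proof.
move=> Pe; apply: contrapT => Hn.
have Hb : forall e', exists n, tgt e' = src e -> ~ Q (i - 1) e' n.
  move=> e'; apply: contrapT => He; apply: Hn; exists e'.
  have Ht : tgt e' = src e.
    by apply: contrapT => Ht; apply: He; exists 0%N => /Ht.
  split => // n; apply: contrapT => Hq; apply: He; exists n => _; exact: Hq.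
have [M HM] := fin_bound Hb (fun t n m nm Hq Ht Hq' => Hq Ht (Q_mono nm Hq')).
have [x [Hx [Hi Ha]]] := Pe M.
apply: (HM (x (i - 1))); first by rewrite -Hi Hx subrK.
by exists x.
Qed.

Lemma closed_label : label_image G y.
Proof.
have [e0 He0] := P0.
have [f Hf] : {f : int * lE G -> lE G & forall ie, P ie.1 ie.2 ->
   tgt ie.2 = src (f ie) /\ P (ie.1 + 1) (f ie)}.
  apply: (choice (P := fun ie e' => P ie.1 ie.2 -> tgt ie.2 = src e' /\ P (ie.1 + 1) e')).
  move=> ie; case: (pselect (P ie.1 ie.2)) => [Pe|nP].
    by have [e' ?] := P_fwd Pe; exists e'.
  by exists ie.2 => /nP.
have [b Hb] : {f : int * lE G -> lE G & forall ie, P ie.1 ie.2 ->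
   tgt (f ie) = src ie.2 /\ P (ie.1 - 1) (f ie)}.
  apply: (choice (P := fun ie e' => P ie.1 ie.2 -> tgt e' = src ie.2 /\ P (ie.1 - 1) e')).
  move=> ie; case: (pselect (P ie.1 ie.2)) => [Pe|nP].
    by have [e' ?] := P_bwd Pe; exists e'.
  by exists ie.2 => /nP.
pose F := fix F (k : nat) := if k is k'.+1 then f (Posz k', F k') else e0.
pose B := fix B (k : nat) := if k is k'.+1 then b (- Posz k', B k') else e0.
have HF : forall k, P (Posz k) (F k).
  elim => [|k IH] //=; have [_ ] := Hf (Posz k, F k) IH; by rewrite posz_succ.
have HB : forall k, P (- Posz k) (B k).
  elim => [|k IH] //=; have [_ ] := Hb (- Posz k, B k) IH.
  by have -> : - Posz k - 1 = - Posz k.+1 by lia.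
pose x := fun i : int => match i with Posz n => F n | Negz n => B n.+1 end.
have Px : forall i, P i (x i).
  by case => [n|n] //=; rewrite NegzE.
exists x; split; last by apply: funext => i; rewrite (P_lab (Px i)).
case => [n|[|n]].
- by rewrite posz_succ /=; have [] := Hf (Posz n, F n) (HF n).
- by rewrite negz0_succ /=; have [] := Hb (- Posz 0, B 0) (HB 0).
- by rewrite negz_succ /=; have [] := Hb (- Posz n.+1, B n.+1) (HB n.+1).
Qed.
End Closed.

Section FC.
Variable A : finType.
Variable Y : (int -> A) -> Prop.
Variable G0 : lgraph A.
Hypothesis HG0 : presents G0 Y.
Implicit Types (z u : int -> A) (w : nat -> A).

Lemma Y_lab u : Y u <-> label_image G0 u.
Proof. by case: HG0 => _ ->. Qed.

Lemma shift_inv u k : Y u -> Y (sh k u).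
Proof.
move=> /Y_lab [x [Hx ->]]; apply/Y_lab.
exists (fun i => x (i + k)); split; last by [].
by move=> i; rewrite Hx addrAC.
Qed.

Lemma shift_inv1 u : Y (sh 1 u) -> Y u.
Proof. by move=> /(shift_inv (-1)); rewrite sh_sh addrN sh0. Qed.

Lemma F_sh1 z : Ffollower Y (sh 1 z) = derive (z 0) (Ffollower Y z).
Proof.
apply/predeqP => w; rewrite /derive !F_iff concat_sh1.
split; [exact: shift_inv1 | exact: shift_inv].
Qed.

Lemma F_shS y (i : int) : Ffollower Y (sh (i + 1) y) = derive (y i) (Ffollower Y (sh i y)).
Proof. by rewrite addrC -sh_sh F_sh1 /sh add0r. Qed.

Lemma F_nonempty z : Y z -> exists w, Ffollower Y z w.
Proof. by move=> Hz; exists (fun n => z (Posz n)); apply/F_iff; rewrite concat_self. Qed.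

Lemma F_concat z w : Ffollower Y (concat z w) = Ffollower Y z.
Proof. by apply/predeqP => w'; rewrite !F_iff concat_concat. Qed.

Definition pre (a : nat -> A) (m : nat) w : nat -> A :=
  fun k => if (k < m)%N then a k else w (k - m)%N.

Lemma pre0 a w : pre a 0 w = w.
Proof. by apply: funext => k; rewrite /pre subn0. Qed.

Lemma preS a m w : pre a m.+1 w = prepend (a 0%N) (pre (fun k => a k.+1) m w).
Proof. by apply: funext => -[|k]. Qed.

Variable K : lgraph A.
Variable phi : lV K -> (nat -> A) -> Prop.
Hypothesis HK : is_future_cover Y K phi.

Lemma fc_edge e : phi (tgt e) = derive (lab e) (phi (src e)).
Proof.
case: HK => _ [_ H]; apply: contrapT => Hn.
by have [_ /(_ Hn e)] := H (src e) (tgt e) (lab e); apply.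
Qed.

Lemma phi_fs v : exists z, Y z /\ phi v = Ffollower Y z.
Proof.
case: HK => _ [H _]; have [z [Hz E]] := (proj2 (H (phi v))) (ex_intro _ v erefl).
by exists z.
Qed.

Lemma phi_nonempty v : exists w, phi v w.
Proof. by have [z [Hz ->]] := phi_fs v; apply: F_nonempty. Qed.

Lemma fs_phi z : Y z -> exists v, phi v = Ffollower Y z.
Proof. by case: HK => _ [H _] Hz; apply/H; exists z. Qed.

Lemma chain (v : nat -> lV K) (a : nat -> A) :
  (forall k, phi (v k.+1) = derive (a k) (phi (v k))) ->
  forall m w, phi (v 0%N) (pre a m w) <-> phi (v m) w.
Proof.
move=> Hc m; elim: m v a Hc => [|m IH] v a Hc w; first by rewrite pre0.
rewrite preS; have := IH (fun k => v k.+1) (fun k => a k.+1) (fun k => Hc k.+1) w.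
by rewrite /= Hc /derive.
Qed.

Lemma fc_path y : Y y -> exists x, edge_shift x /\ (forall i, lab (x i) = y i) /\
  forall i, phi (src (x i)) = Ffollower Y (sh i y).
Proof.
move=> Hy.
have [vf Hvf] : {vf : int -> lV K & forall i, phi (vf i) = Ffollower Y (sh i y)}.
  by apply: (choice (P := fun i v => phi v = Ffollower Y (sh i y))) => i; apply: fs_phi; apply: shift_inv.
have [x Hx] : {x : int -> lE K & forall i, src (x i) = vf i /\ tgt (x i) = vf (i + 1) /\ lab (x i) = y i}.
  apply: (choice (P := fun i e => src e = vf i /\ tgt e = vf (i + 1) /\ lab e = y i)) => i; case: HK => _ [_ /(_ (vf i) (vf (i + 1)) (y i)) [H _]].
  have [e [He _]] : exists! e, src e = vf i /\ tgt e = vf (i + 1) /\ lab e = y i.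
    by apply: H; rewrite !Hvf F_shS.
  by exists e.
exists x; split; first by move=> i; have [_ [-> _]] := Hx i; have [-> _] := Hx (i + 1).
split; first by move=> i; have [_ [_ ->]] := Hx i.
by move=> i; have [-> _] := Hx i.
Qed.

Lemma vfollower_phi v : vfollower v = phi v.
Proof.
apply/predeqP => w; split.
  move=> [p [Hp [Hv ->]]]; have [z [Hz E]] := phi_fs v; rewrite E F_iff Y_lab.
  apply: (@closed_label _ G0) => n.
  have Hc : forall k, phi (src (p k.+1)) = derive (lab (p k)) (phi (src (p k))).
    by move=> k; rewrite -Hp fc_edge.
  have [w'' Hw''] := phi_nonempty (src (p n.+1)).
  have := proj2 (chain Hc n.+1 w'') Hw''; rewrite Hv E F_iff => HY.
  exists (concat z (pre (fun n => lab (p n)) n.+1 w'')); split; first by apply/Y_lab.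
  by case => [k|k] //= Hk; rewrite /pre ltnS Hk.
move=> Hw; have [z [Hz E]] := phi_fs v; move: Hw; rewrite E F_iff => Hw.
have [x [Hx [Hl Hs]]] := fc_path Hw.
exists (fun n => x (Posz n)); split; first by move=> n; rewrite Hx posz_succ.
split; last by apply: funext => n; rewrite Hl.
case: HK => Hinj _; apply: Hinj; rewrite Hs sh0 E F_concat //.
Qed.


Lemma K_label y : label_image K y -> Y y.
Proof.
move=> [x [Hx ->]]; apply/Y_lab; apply: (@closed_label _ G0) => n.
pose v := fun k : nat => src (x (- Posz n + Posz k)).
pose a := fun k : nat => lab (x (- Posz n + Posz k)).
have Hc : forall k, phi (v k.+1) = derive (a k) (phi (v k)).
  by move=> k; rewrite /v /a -fc_edge Hx -addrA posz_succ.
have [w'' Hw''] := phi_nonempty (v (n + n).+1).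
have := proj2 (chain Hc (n + n).+1 w'') Hw''.
have [z [Hz E]] := phi_fs (v 0%N); rewrite E F_iff => HY.
exists (sh n (concat z (pre a (n + n).+1 w''))); split.
  by apply/Y_lab; apply: shift_inv.
move=> j Hj.
have [k [Hk1 [Hk2 Hk3]]] : exists k : nat, j + Posz n = Posz k /\ (k < (n + n).+1)%N /\ - Posz n + Posz k = j.
  exists (absz (j + Posz n)); lia.
by rewrite /sh Hk1 /= /pre Hk2 /a Hk3.
Qed.

Lemma K_presents : presents K Y.
Proof.
split; last first.
  by move=> y; split; [move=> /fc_path [x [Hx [Hl _]]]; exists x; split => //; apply: funext => i; rewrite Hl | apply: K_label].
move=> v; have [z [Hz E]] := phi_fs v.
have [x [Hx [Hl Hs]]] := fc_path Hz.
have Hv : src (x 0) = v by case: HK => Hinj _; apply: Hinj; rewrite Hs sh0 E.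
split; first by exists (x 0).
by exists (x (-1)); rewrite Hx addNr.
Qed.

Lemma K_rr : right_resolving K.
Proof.
move=> e1 e2 Hs Hl.
have Ht : tgt e1 = tgt e2 by case: HK => Hinj _; apply: Hinj; rewrite !fc_edge Hs Hl.
case: HK => _ [_ /(_ (src e1) (tgt e1) (lab e1)) [H _]].
have [e [_ Hu]] := H (fc_edge e1).
by rewrite -(Hu e1) // -(Hu e2).
Qed.

Lemma K_sep : follower_separated K.
Proof. by move=> v w; rewrite !vfollower_phi; case: HK => Hinj _; apply: Hinj. Qed.

Lemma K_regular : regular K Y.
Proof.
move=> v; have [z [Hz E]] := phi_fs v.
have [x [Hx [Hl Hs]]] := fc_path Hz.
have Hv : src (x 0) = v by case: HK => Hinj _; apply: Hinj; rewrite Hs sh0 E.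
exists x; split => //; split; first by rewrite Hx addNr.
rewrite vfollower_phi E; congr Ffollower; apply: funext => i; by rewrite Hl.
Qed.

End FC.

Section Card.
Variable U : Type.
Variable S : U -> Prop.

Lemma finite_card (T : finType) (g : T -> U) :
  (forall u, S u -> exists t, g t = u) -> exists N, has_card S N.
Proof.
move=> Hg.
pose C := [set t : T | `[< S (g t) /\ forall t', g t' = g t -> (enum_rank t <= enum_rank t')%N >]].
exists #|C|; exists (fun i => g (enum_val i)); split.
  move=> i j Hij.
  have := enum_valP i; rewrite inE => /asboolP [_ Hi].
  have := enum_valP j; rewrite inE => /asboolP [_ Hj].
  have Hle := Hi _ (esym Hij); have Hle2 := Hj _ Hij.
  apply: enum_val_inj; apply: enum_rank_inj; apply: val_inj; apply/eqP.
  by rewrite eqn_leq Hle Hle2.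
move=> X; split; last first.
  by move=> [i <-]; have := enum_valP i; rewrite inE => /asboolP [].
move=> HX; have Hex : exists n, `[< exists t, g t = X /\ enum_rank t = n :> nat >].
  by have [t Ht] := Hg X HX; exists (enum_rank t); apply/asboolP; exists t.
have [n /asboolP [t [Ht Hn]] Hmin] := ex_minnP Hex.
have Ct : t \in C.
  rewrite inE; apply/asboolP; split; first by rewrite Ht.
  move=> t' Ht'; rewrite Hn; apply: Hmin; apply/asboolP; exists t'; split => //.
  by rewrite Ht' Ht.
exists (enum_rank_in Ct t); by rewrite enum_rankK_in.
Qed.

Variable N : nat.
Hypothesis HS : has_card S N.

Lemma card_le (T : finType) (h : T -> U) : injective h -> (forall t, S (h t)) -> (#|T| <= N)%N.
Proof.
move=> Hinj HhS; case: HS => f [finj Hf].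
have [g Hg] : {g : T -> 'I_N & forall t, f (g t) = h t}.
  by apply: (choice (P := fun t i => f i = h t)) => t; apply/Hf.
rewrite -[N]card_ord; apply: (@leq_card _ _ g) => t1 t2 E.
by apply: Hinj; rewrite -!Hg E.
Qed.

Lemma card_eq (T : finType) (h : T -> U) : injective h ->
  (forall X, S X <-> exists t, h t = X) -> #|T| = N.
Proof.
move=> Hinj Hh; apply/eqP; rewrite eqn_leq (card_le Hinj); last by move=> t; apply/Hh; exists t.
case: HS => f [finj Hf].
have [g Hg] : {g : 'I_N -> T & forall i, h (g i) = f i}.
  by apply: (choice (P := fun i t => h t = f i)) => i; apply/Hh/Hf; exists i.
rewrite -{1}[N]card_ord; apply: (@leq_card _ _ g) => t1 t2 E.
by apply: finj; rewrite -!Hg E.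
Qed.

Lemma card_onto (T : finType) (h : T -> U) : injective h -> (forall t, S (h t)) ->
  #|T| = N -> forall X, S X -> exists t, h t = X.
Proof.
move=> Hinj HhS Hc X HX; case: HS => f [finj Hf].
have [g Hg] : {g : T -> 'I_N & forall t, f (g t) = h t}.
  by apply: (choice (P := fun t i => f i = h t)) => t; apply/Hf.
have ginj : injective g by move=> t1 t2 E; apply: Hinj; rewrite -!Hg E.
have [i <-] := (proj1 (Hf X)) HX.
have : i \in codom g by apply: inj_card_onto => //; rewrite card_ord Hc.
by move=> /codomP [t ->]; exists t.
Qed.

End Card.

Section Finite.
Variable A : finType.
Variable Y : (int -> A) -> Prop.
Variable G0 : lgraph A.
Hypothesis HG0 : presents G0 Y.

Definition Phi (Sv : {set lV G0}) : (nat -> A) -> Prop :=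
  fun w => exists v, v \in Sv /\ vfollower v w.

Definition Tset (y : int -> A) : {set lV G0} :=
  [set v | `[< exists x : int -> lE G0, edge_shift x /\
      (forall n, lab (x (Negz n)) = y (Negz n)) /\ tgt (x (Negz 0)) = v >]].

Lemma Phi_T y : Phi (Tset y) = Ffollower Y y.
Proof.
apply/predeqP => w; rewrite F_iff (Y_lab HG0); split.
  move=> [v [Hv [p [Hp [Hp0 ->]]]]]; move: Hv; rewrite inE => /asboolP [x [Hx [Hl Ht]]].
  pose x' := fun i : int => match i with Posz n => p n | Negz n => x (Negz n) end.
  exists x'; split; last by apply: funext => -[n|n] //=; rewrite Hl.
  case => [n|[|n]].
  - by rewrite posz_succ /=; apply: Hp.
  - by rewrite negz0_succ /= Ht Hp0.
  - by rewrite negz_succ /= -(negz_succ n) Hx.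
move=> [x [Hx E]]; exists (tgt (x (Negz 0))); split.
  rewrite inE; apply/asboolP; exists x; split => //; split => // n.
  by have := congr1 (fun f => f (Negz n)) E.
exists (fun n => x (Posz n)); split; first by move=> n; rewrite Hx posz_succ.
split; first by rewrite Hx negz0_succ.
by apply: funext => n; have := congr1 (fun f => f (Posz n)) E.
Qed.

Lemma sofic_card : exists N, has_card (follower_sets Y) N.
Proof.
apply: (@finite_card _ _ _ Phi) => X [y [Hy ->]].
by exists (Tset y); apply: Phi_T.
Qed.

End Finite.

Section GG.
Variable A : finType.
Variable Y : (int -> A) -> Prop.
Variable G : lgraph A.
Hypotheses (HP : presents G Y) (Hrr : right_resolving G) (Hreg : regular G Y)
  (Hsep : follower_separated G).

Lemma vf_fs (v : lV G) : follower_sets Y (vfollower v).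
Proof.
have [z [Hz [_ E]]] := Hreg v; exists (fun i => lab (z i)); split => //.
by case: HP => _ ->; exists z.
Qed.

Lemma vf_nonempty (v : lV G) : exists w, vfollower v w.
Proof.
have [out Hout] : {out : lV G -> lE G & forall v, src (out v) = v}.
  apply: (choice (P := fun v e => src e = v)) => v'; by case: HP => /(_ v') [].
pose p := fix p (n : nat) := if n is k.+1 then out (tgt (p k)) else out v.
exists (fun n => lab (p n)); exists p; split; last by split => //=.
by move=> n; rewrite /= Hout.
Qed.

Lemma edgeG (e : lE G) : vfollower (tgt e) = derive (lab e) (vfollower (src e)).
Proof.
apply/predeqP => w; split.
  move=> [r [Hr [Hr0 ->]]].
  exists (fun n => if n is k.+1 then r k else e); split.
    by case => [|n] //=; rewrite Hr0.
  by split => //; apply: funext => -[|k].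
move=> [r [Hr [Hr0 E]]].
have Hl : lab (r 0%N) = lab e by have := congr1 (fun f => f 0%N) E.
have He := Hrr Hr0 Hl.
exists (fun n => r n.+1); split; first by move=> n; apply: Hr.
split; first by rewrite -Hr He.
by apply: funext => n; have := congr1 (fun f => f n.+1) E.
Qed.

Variable N : nat.
Hypothesis HN : has_card (follower_sets Y) N.

Lemma G_le : (#|lV G| <= N)%N.
Proof. exact: (card_le HN Hsep vf_fs). Qed.

Lemma G_fc : #|lV G| = N -> is_future_cover Y G (@vfollower _ G).
Proof.
move=> Hc; split; first exact: Hsep.
split.
  move=> X; split; first exact: (card_onto HN Hsep vf_fs Hc).
  by move=> [v <-]; apply: vf_fs.
move=> u v a; split.
  move=> E; have [w Hw] := vf_nonempty v; rewrite E in Hw.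
  move: Hw => [r [Hr [Hr0 E']]].
  have Hl : lab (r 0%N) = a by have := congr1 (fun f => f 0%N) E'.
  exists (r 0%N); split.
    split => //; split => //; apply: Hsep; by rewrite edgeG Hr0 Hl E.
  by move=> e' [H1 [_ H3]]; apply: Hrr; rewrite ?H1 ?H3.
by move=> Hn e [H1 [H2 H3]]; apply: Hn; rewrite -H1 -H2 -H3 edgeG.
Qed.

End GG.

Section Iso.
Variable A : finType.
Variable Y : (int -> A) -> Prop.

Lemma fc_edge' (K : lgraph A) phi (HK : is_future_cover Y K phi) e :
  phi (tgt e) = derive (lab e) (phi (src e)).
Proof.
case: HK => _ [_ H]; apply: contrapT => Hn.
by have [_ /(_ Hn e)] := H (src e) (tgt e) (lab e); apply.
Qed.

Lemma fc_vmap (K1 K2 : lgraph A) phi1 phi2 :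
  is_future_cover Y K1 phi1 -> is_future_cover Y K2 phi2 ->
  {fV : lV K1 -> lV K2 & forall v, phi2 (fV v) = phi1 v}.
Proof.
move=> [_ [H1 _]] [_ [H2 _]].
apply: (choice (P := fun v v' => phi2 v' = phi1 v)) => v.
by apply/H2/H1; exists v.
Qed.

Lemma fc_emap (K1 K2 : lgraph A) phi1 phi2 (H1 : is_future_cover Y K1 phi1)
  (H2 : is_future_cover Y K2 phi2) (fV : lV K1 -> lV K2) :
  (forall v, phi2 (fV v) = phi1 v) ->
  {fE : lE K1 -> lE K2 & forall e, src (fE e) = fV (src e) /\ tgt (fE e) = fV (tgt e) /\
      lab (fE e) = lab e}.
Proof.
move=> HV.
apply: (choice (P := fun e e' => src e' = fV (src e) /\ tgt e' = fV (tgt e) /\ lab e' = lab e)) => e.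
case: H2 => [_ [_ /(_ (fV (src e)) (fV (tgt e)) (lab e)) [H _]]].
have [e' [He' _]] : exists! e', src e' = fV (src e) /\ tgt e' = fV (tgt e) /\ lab e' = lab e.
  by apply: H; rewrite !HV (fc_edge' H1).
by exists e'.
Qed.

Lemma fc_iso (K1 K2 : lgraph A) phi1 phi2 :
  is_future_cover Y K1 phi1 -> is_future_cover Y K2 phi2 -> lgraph_iso K1 K2.
Proof.
move=> H1 H2.
have [fV HV] := fc_vmap H1 H2; have [gV HgV] := fc_vmap H2 H1.
have [fE HE] := fc_emap H1 H2 HV; have [gE HgE] := fc_emap H2 H1 HgV.
have inj1 := proj1 H1; have inj2 := proj1 H2.
have c1 : cancel fV gV by move=> v; apply: inj1; rewrite HgV HV.
have c2 : cancel gV fV by move=> v; apply: inj2; rewrite HV HgV.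
have rr1 : right_resolving K1.
  move=> e1 e2 Hs Hl.
  have Ht : tgt e1 = tgt e2 by apply: inj1; rewrite !(fc_edge' H1) Hs Hl.
  have [H _] := proj2 (proj2 H1) (src e1) (tgt e1) (lab e1).
  have [e [_ Hu]] := H (fc_edge' H1 e1).
  by rewrite -(Hu e1) // -(Hu e2).
have rr2 : right_resolving K2.
  move=> e1 e2 Hs Hl.
  have Ht : tgt e1 = tgt e2 by apply: inj2; rewrite !(fc_edge' H2) Hs Hl.
  have [H _] := proj2 (proj2 H2) (src e1) (tgt e1) (lab e1).
  have [e [_ Hu]] := H (fc_edge' H2 e1).
  by rewrite -(Hu e1) // -(Hu e2).
exists fV, fE; split; first by exists gV.
split; last exact: HE.
exists gE.
  move=> e; apply: rr1.
    by have [-> _] := HgE (fE e); have [-> _] := HE e; rewrite c1.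
  by have [_ [_ ->]] := HgE (fE e); have [_ [_ ->]] := HE e.
move=> e; apply: rr2.
  by have [-> _] := HE (gE e); have [-> _] := HgE e; rewrite c2.
by have [_ [_ ->]] := HE (gE e); have [_ [_ ->]] := HgE e.
Qed.

End Iso.

Section Exist.
Variable A : finType.
Variable Y : (int -> A) -> Prop.
Variable N : nat.
Variable f : 'I_N -> (nat -> A) -> Prop.

Definition fcE := {t : 'I_N * A * 'I_N | `[< f t.2 = derive t.1.2 (f t.1.1) >]}.

Definition fcK : lgraph A :=
  @LGraph A 'I_N fcE (fun e => (val e).1.1) (fun e => (val e).2) (fun e => (val e).1.2).

Lemma fcK_fc : injective f -> (forall X, follower_sets Y X <-> exists i, f i = X) ->
  is_future_cover Y fcK f.
Proof.
move=> finj Hf; split => //; split => // u v a; split.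
  move=> E; have P : `[< f (u, a, v).2 = derive (u, a, v).1.2 (f (u, a, v).1.1) >] by apply/asboolP.
  exists (exist _ (u, a, v) P); split => //.
  move=> e [H1 [H2 H3]]; apply: val_inj => /=.
  by move: H1 H2 H3; case: e => -[[u0 a0] v0] /= _ <- <- <-.
move=> Hn e [H1 [H2 H3]]; apply: Hn.
by case: e H1 H2 H3 => -[[u' a'] v'] /= /asboolP E <- <- <-.
Qed.
End Exist.

Theorem corollary3p3 (A : finType) (Y : (int -> A) -> Prop) (HY : sofic Y) :
  exists N : nat,
    has_card (follower_sets Y) N /\
    (forall G : lgraph A,
       presents G Y -> right_resolving G -> regular G Y -> follower_separated G ->
       (#|lV G| <= N)%N) /\
    (exists (K : lgraph A) (phi : lV K -> (nat -> A) -> Prop),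
       is_future_cover Y K phi) /\
    (forall (K : lgraph A) (phi : lV K -> (nat -> A) -> Prop),
       is_future_cover Y K phi ->
       presents K Y /\ right_resolving K /\ regular K Y /\ follower_separated K /\
       #|lV K| = N /\
       (forall G : lgraph A,
          presents G Y -> right_resolving G -> regular G Y -> follower_separated G ->
          #|lV G| = N -> lgraph_iso G K)).
Proof.
case: HY => G0 HG0.
have [N HN] := sofic_card HG0.
exists N; split => //; split.
  by move=> G HP Hrr Hreg Hsep; apply: (G_le HP Hreg Hsep HN).
split.
  case: (HN) => f [finj Hf]; exists (fcK f), f; exact: (fcK_fc finj Hf).
move=> K phi HK; split; first exact: (K_presents HG0 HK).
split; [first [exact: (K_rr HG0 HK) | exact: (K_rr HK)] | ].
split; [first [exact: (K_regular HG0 HK) | exact: (K_regular HK)] | ].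
split; [first [exact: (K_sep HG0 HK) | exact: (K_sep HK)] | ].
split; first by case: HK => Hinj [Hs _]; apply: (card_eq HN Hinj) => X; rewrite Hs.
move=> G HP Hrr Hreg Hsep Hc.
exact: (fc_iso (G_fc HP Hrr Hreg Hsep HN Hc) HK).
Qed.
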